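(* Let $k\ge 1$ and $n$ be integers with $2k\le n\le 2k+2$ (equivalently, $\mathrm{SG}(n,k)$ is $t$-chromatic with $t=n-2k+2\le 4$). Then $\mathrm{SG}(n,k)$ admits an orientation in which every shortest odd cycle of $\mathrm{SG}(n,k)$ is alternating (vacuously if it has no odd cycle).
   Context: The Kneser graph $\mathrm{KG}(n,k)$ ($n\ge 2k$) has as vertices all $k$-element subsets of $[n]=\{1,\dots,n\}$, two being adjacent iff disjoint. The Schrijver graph $\mathrm{SG}(n,k)$ is the induced subgraph of $\mathrm{KG}(n,k)$ on the stable $k$-subsets, i.e., those $A$ containing no pair $\{i,i+1\}$ for $i\in[n-1]$ and not containing both $1$ and $n$; its chromatic number is $n-2k+2$. An orientation assigns each edge exactly one direction. In an oriented graph, a subgraph that is a cycle is called alternating if at most one of its vertices has both positive in-degree and positive out-degree within that cycle. *)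

(* Defs.v *)
(* Ground set [n] is encoded as 'I_n, element m+1 of [n] <-> ordinal m. *)
From mathcomp Require Import all_boot.
Set Implicit Arguments. Unset Strict Implicit. Unset Printing Implicit Defensive.

Definition stableb (n : nat) (A : {set 'I_n}) : bool :=
  [forall i : 'I_n, forall j : 'I_n,
     ((i \in A) && (j \in A)) ==>
     ~~ ((val j == (val i).+1) || ((val i == 0) && (val j == n.-1)))].

Definition SGvert (n k : nat) (A : {set 'I_n}) : bool :=
  (#|A| == k) && stableb A.

Definition SGadj (n k : nat) (A B : {set 'I_n}) : bool :=
  [&& SGvert k A, SGvert k B & [disjoint A & B]].

Definition is_orientation (n k : nat) (o : rel {set 'I_n}) : Prop :=
  (forall A B, o A B -> SGadj k A B) /\
  (forall A B, SGadj k A B -> o A B (+) o B A).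

Definition SGcycle (n k : nat) (c : seq {set 'I_n}) : bool :=
  [&& 3 <= size c, uniq c & cycle (SGadj k) c].

Definition odd_cycle (n k : nat) (c : seq {set 'I_n}) : bool :=
  SGcycle k c && odd (size c).

Definition shortest_odd_cycle (n k : nat) (c : seq {set 'I_n}) : Prop :=
  odd_cycle k c /\ forall c' : seq {set 'I_n}, odd_cycle k c' -> size c <= size c'.

Definition mixed_at (n : nat) (o : rel {set 'I_n}) (c : seq {set 'I_n})
    (i : nat) : bool :=
  let L := size c in
  let x := nth set0 c i in
  let p := nth set0 c ((i + L).-1 %% L) in
  let q := nth set0 c (i.+1 %% L) in
  (o p x && o x q) || (o q x && o x p).

Definition alternating (n : nat) (o : rel {set 'I_n}) (c : seq {set 'I_n}) : bool :=
  count (mixed_at o c) (iota 0 (size c)) <= 1.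

(* Main.v *)
Require Import Defs.
From mathcomp Require Import all_boot zify.
Set Implicit Arguments. Unset Strict Implicit. Unset Printing Implicit Defensive.

Lemma cycle_nthP (T : Type) (x0 : T) (e : rel T) (s : seq T) : 0 < size s ->
  cycle e s <-> (forall i, i < size s -> e (nth x0 s i) (nth x0 s (i.+1 %% size s))).
Proof.
case: s => [//|y s] _; rewrite (cycle_path x0) /=.
split.
- move/andP=> [H0 /(pathP x0) H] i; rewrite ltnS leq_eqVlt => /orP[/eqP->|lti].
  + by rewrite modnn /= -[size s]/((size (y :: s)).-1) nth_last.
  + rewrite modn_small ?ltnS //; case: i lti => [|i] lti /=.
    * by case: s H0 H lti => //= z s _ H _; apply: (H 0).
    * by have := H i.+1 lti.
- move=> H; apply/andP; split.
  + have := H (size s) (leqnn _); rewrite modnn /= => H'.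
    by move: H'; rewrite -[size s]/((size (y :: s)).-1) nth_last.
  + apply/(pathP x0) => i lti.
    have := H i (ltnW lti); rewrite modn_small ?ltnS //=.
Qed.
Lemma odd_path_changes (b : nat -> bool) m :
  odd (\sum_(i < m) (b i != b i.+1)) = (b 0 != b m).
Proof.
elim: m => [|m IH]; first by rewrite big_ord0; case: (b 0).
rewrite big_ord_recr /= oddD IH oddb.
by case: (b 0); case: (b m); case: (b m.+1).
Qed.

Lemma even_cyc_changes (b : nat -> bool) L : 0 < L ->
  ~~ odd (\sum_(i < L) (b i != b (i.+1 %% L))).
Proof.
case: L => [//|L] _; rewrite big_ord_recr /= modnn.
under eq_bigr => i _ do rewrite (@modn_small i.+1) ?ltnS //.
rewrite oddD odd_path_changes.
by case: (b 0); case: (b L).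
Qed.

(* f + changes = L, so f has the parity of L *)
Lemma odd_free (b : nat -> bool) L : 0 < L ->
  (forall i, i < L -> ~~ (b i && b (i.+1 %% L))) ->
  odd (\sum_(i < L) (~~ b i && ~~ b (i.+1 %% L))) = odd L.
Proof.
move=> L0 H.
have E : \sum_(i < L) (~~ b i && ~~ b (i.+1 %% L)) + \sum_(i < L) (b i != b (i.+1 %% L)) = L.
  rewrite -big_split /= -[X in _ = X]card_ord -sum1_card.
  apply: eq_bigr => i _; have := H i (ltn_ord i).
  by case: (b i); case: (b (i.+1 %% L)).
have := even_cyc_changes b L0.
set c := \sum_(i < L) (b i != b (i.+1 %% L)).
set f := \sum_(i < L) (~~ b i && ~~ b (i.+1 %% L)).
move: E; rewrite -/c -/f => E Hc.
by rewrite -E oddD (negbTE Hc) addbF.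
Qed.
Lemma prev_val i L : i < L -> (i + L).-1 %% L = if i is j.+1 then j else L.-1.
Proof.
case: i => [|i] H.
  by rewrite add0n modn_small //; case: L H => // L _; rewrite ltnSn.
by rewrite addSn /= modnDr modn_small // ltnW.
Qed.

Lemma next_val i L : i < L -> i.+1 %% L = if i.+1 == L then 0 else i.+1.
Proof.
move=> H; case: eqP => [->|ne]; first by rewrite modnn.
by rewrite modn_small //; lia.
Qed.

Lemma reindex_prev (F : nat -> nat) L : 0 < L ->
  \sum_(i < L) F ((i + L).-1 %% L) = \sum_(i < L) F i.
Proof.
move=> L0.
pose h (i : 'I_L) : 'I_L := Ordinal (ltn_pmod ((i + L).-1) L0).
have hinj : injective h.
  move=> i j /(congr1 val) /=; case: i j => [i Hi] [j Hj] /= E; apply/val_inj => /=.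
  rewrite (prev_val Hi) (prev_val Hj) in E.
  by case: i Hi E => [|i] Hi; case: j Hj => [|j] Hj /= E; lia.
by rewrite [RHS](reindex_inj hinj).

Qed.

Lemma sum_free (n k L : nat) (A : nat -> {set 'I_n}) :
  (forall i, i < L -> #|A i| = k) ->
  (forall i, i < L -> [disjoint A i & A (i.+1 %% L)]) ->
  \sum_(x : 'I_n) \sum_(i < L) ((x \notin A i) && (x \notin A (i.+1 %% L)))
     = (n - 2 * k) * L.
Proof.
move=> Hc Hd; rewrite exchange_big /=.
transitivity (\sum_(i < L) (n - 2 * k)); last by rewrite sum_nat_const card_ord mulnC.
apply: eq_bigr => i _.
have -> : \sum_(x : 'I_n) ((x \notin A i) && (x \notin A (i.+1 %% L)))
          = #|~: (A i :|: A (i.+1 %% L))|.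
  rewrite -sum1_card [RHS]big_mkcond /=; apply: eq_bigr => x _.
  by rewrite !inE; case: (x \in A i); case: (x \in A _).
have Hn := cardsC (A i :|: A (i.+1 %% L)); rewrite card_ord in Hn.
rewrite cardsU (disjoint_setI0 (Hd i (ltn_ord i))) cards0 subn0 in Hn.
have Hi := ltn_ord i.
have H1 := Hc i Hi.
have H2 := Hc (i.+1 %% L) (ltn_pmod _ (leq_ltn_trans (leq0n _) Hi)).
lia.
Qed.
Section Ori.
Variables (m k : nat).
Local Notation T := {set 'I_m.+2}.
Definition z0 : 'I_m.+2 := ord0.
Definition z1 : 'I_m.+2 := inord 1.
Definition tb (A B : T) : bool := enum_rank A < enum_rank B.
Definition rule (A B : T) : bool :=
  if z0 \in A then true else if z0 \in B then false else
  if z1 \in B then true else if z1 \in A then false else tb A B.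
Definition ori : rel T := fun (A B : T) => SGadj k A B && rule A B.

Lemma SGadj_sym (A B : T) : SGadj k A B = SGadj k B A.
Proof.
by rewrite /SGadj disjoint_sym; case: (SGvert k A); case: (SGvert k B).
Qed.

Lemma SGadj_disj (A B : T) : SGadj k A B -> [disjoint A & B].
Proof. by case/and3P. Qed.

Lemma adj_neq (A B : T) : 0 < k -> SGadj k A B -> A != B.
Proof.
move=> k0 /and3P[/andP[/eqP cA _] _ dAB]; apply/eqP => E; move: dAB; rewrite E.
move: cA; rewrite E => cB.
have : 0 < #|B| by rewrite cB.
case/card_gt0P => x xB; rewrite disjoint_subset => /subsetP /(_ x xB).
by rewrite inE xB.
Qed.

Lemma z1_val : val z1 = 1.
Proof. by rewrite /z1 /= inordK. Qed.

Lemma stable01 (A : T) : SGvert k A -> z0 \in A -> z1 \notin A.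
Proof.
case/andP => _ /forallP H a0; apply/negP => a1.
have := H z0; move/forallP/(_ z1); rewrite a0 a1 /= z1_val.
by [].
Qed.

Lemma rule_xor (A B : T) : [disjoint A & B] -> A != B -> rule A B (+) rule B A.
Proof.
move=> dAB nAB; rewrite /rule.
case h0A: (z0 \in A).
  by rewrite (disjointFr dAB h0A).
case h0B: (z0 \in B) => //.
case h1B: (z1 \in B).
  by rewrite (disjointFl dAB h1B).
case h1A: (z1 \in A) => //.
rewrite /tb; have : enum_rank A != enum_rank B.
  by apply: contra nAB => /eqP /enum_rank_inj ->.
by rewrite neq_ltn; case/orP => H; rewrite H /=; [rewrite ltnNge ltnW | rewrite ltnNge ltnW].
Qed.

Lemma ori_orientation : 0 < k -> is_orientation k ori.
Proof.
move=> k0; split; first by move=> A B /andP[].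
move=> A B adj; rewrite /ori adj -SGadj_sym adj /=.
exact: rule_xor (SGadj_disj adj) (adj_neq k0 adj).
Qed.

Lemma R1 (X Y : T) : ori X Y -> z0 \notin Y.
Proof.
case/andP => /SGadj_disj d; rewrite /rule.
case h0X: (z0 \in X); first by rewrite (disjointFr d h0X).
by case: (z0 \in Y).
Qed.

Lemma R2 (X Y : T) : ori X Y -> z1 \notin X.
Proof.
case/andP => adj; have d := SGadj_disj adj; rewrite /rule.
case h0X: (z0 \in X).
  by move: adj => /and3P[vX _ _] _; exact: stable01 vX h0X.
case: (z0 \in Y) => //.
case h1Y: (z1 \in Y); first by rewrite (disjointFl d h1Y).
by case: (z1 \in X).
Qed.

Definition out0 (X Y : T) := ori X Y && (z0 \notin X) && (z0 \notin Y).
Definition in1 (X Y : T) := ori Y X && (z1 \notin X) && (z1 \notin Y).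

Lemma mixed_out0 (p x q : T) :
  ((ori p x && ori x q) || (ori q x && ori x p)) <= out0 x q + out0 x p.
Proof.
rewrite /out0; case/boolP: (ori p x && ori x q) => [/andP[a b]|_] /=.
  by rewrite b (R1 a) (R1 b).
case/boolP: (ori q x && ori x p) => [/andP[a b]|_] //=.
by rewrite b (R1 a) (R1 b) addn1.
Qed.

Lemma mixed_in1 (p x q : T) :
  ((ori p x && ori x q) || (ori q x && ori x p)) <= in1 x p + in1 x q.
Proof.
rewrite /in1; case/boolP: (ori p x && ori x q) => [/andP[a b]|_] /=.
  by rewrite a (R2 a) (R2 b).
case/boolP: (ori q x && ori x p) => [/andP[a b]|_] //=.
by rewrite a (R2 a) (R2 b) addn1.
Qed.

Lemma edge_out0 (X Y : T) : 0 < k -> SGadj k X Y ->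
  out0 X Y + out0 Y X = ((z0 \notin X) && (z0 \notin Y)).
Proof.
move=> k0 adj; have := ori_orientation k0 => [[_ /(_ X Y adj)]].
rewrite /out0; case: (ori X Y); case: (ori Y X) => //= _;
by case: (z0 \in X); case: (z0 \in Y).
Qed.

Lemma edge_in1 (X Y : T) : 0 < k -> SGadj k X Y ->
  in1 Y X + in1 X Y = ((z1 \notin X) && (z1 \notin Y)).
Proof.
move=> k0 adj; have := ori_orientation k0 => [[_ /(_ X Y adj)]].
rewrite /in1; case: (ori X Y); case: (ori Y X) => //= _;
by case: (z1 \in X); case: (z1 \in Y).
Qed.
End Ori.

Lemma next_prev i L : i < L -> ((i + L).-1 %% L).+1 %% L = i.
Proof.
move=> H; rewrite (prev_val H); case: i H => [|i] H.
  by case: L H => // L _ /=; rewrite modnn.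
by rewrite modn_small.
Qed.

Lemma charge (L : nat) (M fr : nat -> nat) (u : nat -> nat -> nat) : 0 < L ->
  (forall i, i < L -> M i <= u i (i.+1 %% L) + u i ((i + L).-1 %% L)) ->
  (forall i, i < L -> u i (i.+1 %% L) + u (i.+1 %% L) i = fr i) ->
  \sum_(i < L) M i <= \sum_(i < L) fr i.
Proof.
move=> L0 HM Hf.
apply: (@leq_trans (\sum_(i < L) (u i (i.+1 %% L) + u i ((i + L).-1 %% L)))).
  by apply: leq_sum => i _; apply: HM.
rewrite big_split /=.
have -> : \sum_(i < L) u i ((i + L).-1 %% L)
          = \sum_(i < L) (fun j => u (j.+1 %% L) j) ((i + L).-1 %% L).
  by apply: eq_bigr => i _ /=; rewrite next_prev.
rewrite (reindex_prev (fun j => u (j.+1 %% L) j) L0) -big_split /=.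
by rewrite leq_eqVlt; apply/orP; left; apply/eqP; apply: eq_bigr => i _; apply: Hf.
Qed.

Lemma count_iota_sum (P : pred nat) L : count P (iota 0 L) = \sum_(i < L) P i.
Proof.
rewrite -sum1_count big_mkcond /= -(big_mkord xpredT (fun i => (P i : nat))).
rewrite /index_iota subn0; apply: eq_bigr => i _; by case: (P i).
Qed.
Section Cyc.
Variables (m k p : nat).
Hypothesis k0 : 0 < k.
Hypothesis Hn : (m.+2 = 2 * k + 1 /\ p = k) \/
                (m.+2 = 2 * k + 2 /\ (k = 2 * p \/ k + 1 = 2 * p)).
Local Notation N := m.+2.

Definition gg i := if i < p then 2 * i else (2 * i).+1.
Definition rt j a := if a + j < N then a + j else a + j - N.

Lemma gfact i : i < k -> (i < p /\ gg i = 2 * i) \/ (p <= i /\ gg i = 2 * i + 1).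
Proof. by move=> _; rewrite /gg; case: ltnP => H; [left | right]; split => //; lia. Qed.

Lemma rfact j a : (a + j < N /\ rt j a = a + j) \/ (N <= a + j /\ rt j a = a + j - N).
Proof. by rewrite /rt; case: ltnP => H; [left | right]. Qed.

Lemma rt_lt j (i : 'I_k) : j <= 2 * p -> rt j (gg i) < N.
Proof.
move=> Hj; have := ltn_ord i; have := gfact (ltn_ord i); have := rfact j (gg i); lia.
Qed.

Definition fB j (i : 'I_k) : 'I_N := inord (rt j (gg i)).
Definition B j : {set 'I_N} := [set fB j i | i : 'I_k].

Lemma memB j (x : 'I_N) : j <= 2 * p ->
  (x \in B j) <-> exists i : 'I_k, val x = rt j (gg i).
Proof.
move=> Hj; split.
  by case/imsetP => i _ ->; exists i; rewrite /fB /= inordK // rt_lt.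
case=> i E; apply/imsetP; exists i => //; apply/val_inj.
by rewrite /fB /= inordK // rt_lt.
Qed.

Lemma cardB j : j <= 2 * p -> #|B j| = k.
Proof.
move=> Hj; rewrite card_imset ?card_ord // => i1 i2.
move/(congr1 val); rewrite /fB /= !inordK ?rt_lt // => E.
apply/val_inj => /=.
have := ltn_ord i1; have := gfact (ltn_ord i1); have := ltn_ord i2; have := gfact (ltn_ord i2).
have := rfact j (gg i1); have := rfact j (gg i2); lia.
Qed.

Lemma stableB j : j <= 2 * p -> stableb (B j).
Proof.
move=> Hj; apply/forallP => x; apply/forallP => y; apply/implyP.
case/andP => /(memB _ Hj) [i1 E1] /(memB _ Hj) [i2 E2].
apply/negP => /orP [/eqP E | /andP [/eqP Ea /eqP Eb]];
have := ltn_ord i1; have := gfact (ltn_ord i1); have := ltn_ord i2; have := gfact (ltn_ord i2);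
have := rfact j (gg i1); have := rfact j (gg i2); lia.
Qed.

Lemma vertB j : j <= 2 * p -> SGvert k (B j).
Proof. by move=> Hj; rewrite /SGvert cardB // eqxx stableB. Qed.

Lemma disjB j1 j2 : j1 <= 2 * p -> j2 <= 2 * p ->
  (j2 = j1.+1 \/ (j1 = 2 * p /\ j2 = 0)) -> [disjoint B j1 & B j2].
Proof.
move=> H1 H2 Hj; rewrite disjoint_subset; apply/subsetP => x.
move=> /(memB _ H1) [i1 E1]; rewrite inE; apply/negP => /(memB _ H2) [i2 E2].
have := ltn_ord i1; have := gfact (ltn_ord i1); have := ltn_ord i2; have := gfact (ltn_ord i2).
have := rfact j1 (gg i1); have := rfact j2 (gg i2); lia.
Qed.

Lemma neqB j1 j2 : j1 < j2 -> j2 <= 2 * p -> B j1 != B j2.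
Proof.
move=> H12 H2; have H1 : j1 <= 2 * p by lia.
have p0 : 0 < p by lia.
have pk : p.-1 < k by lia.
apply/eqP => E.
have x1 : fB j2 (Ordinal k0) \in B j1 by rewrite E; apply/imsetP; exists (Ordinal k0).
have x2 : fB j2 (Ordinal pk) \in B j1 by rewrite E; apply/imsetP; exists (Ordinal pk).
move: x1 x2 => /(memB _ H1) [i1 E1] /(memB _ H1) [i2 E2].
have r1 := rt_lt (Ordinal k0) H2; have r2 := rt_lt (Ordinal pk) H2.
move: E1 E2; rewrite /fB /= !inordK // => E1 E2.
have := ltn_ord i1; have := gfact (ltn_ord i1); have := ltn_ord i2; have := gfact (ltn_ord i2).
have := gfact k0; have := gfact pk.
have := rfact j1 (gg i1); have := rfact j1 (gg i2).
have := rfact j2 (gg 0); have := rfact j2 (gg p.-1); lia.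
Qed.

Definition cyc := mkseq B (2 * p).+1.

Lemma cyc_odd : odd_cycle k cyc.
Proof.
have p0 : 0 < p by lia.
rewrite /odd_cycle /SGcycle /cyc size_mkseq.
apply/andP; split; last by rewrite /= oddM.
apply/and3P; split.
- by lia.
- rewrite /mkseq map_inj_in_uniq ?iota_uniq // => a b.
  rewrite !mem_iota !add0n => Ha Hb E.
  case: (ltngtP a b) => H //.
    have hb : b <= 2 * p by lia.
    by have := neqB H hb; rewrite E eqxx.
  have ha : a <= 2 * p by lia.
  by have := neqB H ha; rewrite E eqxx.
- apply/(cycle_nthP set0); first by rewrite size_mkseq.
  rewrite size_mkseq => i Hi; rewrite !nth_mkseq ?ltn_pmod //.
  rewrite (next_val Hi).
  have Hi' : i <= 2 * p by lia.
  case: eqP => [E|ne]; rewrite /SGadj !vertB //= ?disjB //; lia.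
Qed.
End Cyc.

Lemma sum_eq1 (T : finType) (a : T) : \sum_(x : T) (x == a) = 1.
Proof. by rewrite (bigD1 a) //= eqxx big1 // => x /negbTE ->. Qed.

Theorem mainTheorem15 (n k : nat) :
  1 <= k -> 2 * k <= n -> n <= 2 * k + 2 ->
  exists o : rel {set 'I_n},
    is_orientation k o /\
    forall c : seq {set 'I_n}, shortest_odd_cycle k c -> alternating o c.
Proof.
move=> k0 h1 h2.
case: n h1 h2 => [|[|m]] h1 h2; try lia.
exists (@ori m k); split; first exact: (ori_orientation m k0).
move=> c [oc short].
move: (oc) => /andP [/and3P [L3 uc ccyc] oL].
set L := size c in L3 oL ccyc.
have L0 : 0 < L by lia.
pose A i := nth set0 c i.
have adj : forall i, i < L -> SGadj k (A i) (A (i.+1 %% L)).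
  by apply/(cycle_nthP set0).
pose f (x : 'I_m.+2) := \sum_(i < L) ((x \notin A i) && (x \notin A (i.+1 %% L))).
have fodd : forall x, odd (f x).
  move=> x; rewrite /f (@odd_free (fun i => x \in A i) L L0) //.
  move=> i Hi; apply/negP => /andP [a b].
  by have := disjointFr (SGadj_disj (adj i Hi)) a; rewrite b.
have fsum : \sum_(x : 'I_m.+2) f x = (m.+2 - 2 * k) * L.
  apply: sum_free => i Hi; last exact: SGadj_disj (adj i Hi).
  by have := adj i Hi => /and3P [/andP [/eqP -> _] _ _].
have cnt : count (mixed_at (@ori m k) c) (iota 0 L) = \sum_(i < L) mixed_at (@ori m k) c i.
  exact: count_iota_sum.
have b0 : \sum_(i < L) mixed_at (@ori m k) c i <= f (z0 m).
  rewrite /f; apply: (charge (M := fun i => mixed_at (@ori m k) c i) (fr := fun i => ((z0 m) \notin A i) && ((z0 m) \notin A (i.+1 %% L)))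
            (u := fun i j => @out0 m k (A i) (A j)) L0).
  - by move=> i Hi; rewrite /mixed_at; apply: mixed_out0.
  - by move=> i Hi; apply: edge_out0 (adj i Hi).
have b1 : \sum_(i < L) mixed_at (@ori m k) c i <= f (z1 m).
  rewrite /f; apply: (charge (M := fun i => mixed_at (@ori m k) c i) (fr := fun i => ((z1 m) \notin A i) && ((z1 m) \notin A (i.+1 %% L)))
            (u := fun i j => @in1 m k (A i) (A j)) L0).
  - by move=> i Hi; rewrite /mixed_at [X in _ <= X]addnC; apply: mixed_in1.
  - by move=> i Hi; rewrite addnC; apply: edge_in1 (adj i Hi).
rewrite /alternating -/L cnt leqNgt; apply/negP => H2.
have f0 : 3 <= f (z0 m).
  have := fodd (z0 m); have : 2 <= f (z0 m) by lia.
  by case: (f (z0 m)) => [|[|[|x]]].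
have f1 : 3 <= f (z1 m).
  have := fodd (z1 m); have : 2 <= f (z1 m) by lia.
  by case: (f (z1 m)) => [|[|[|x]]].
have z01 : (z0 m) != (z1 m) :> 'I_m.+2 by apply/eqP => /(congr1 val); rewrite z1_val.
have lb : \sum_(x : 'I_m.+2) (1 + 2 * (x == (z0 m)) + 2 * (x == (z1 m))) <= \sum_(x : 'I_m.+2) f x.
  apply: leq_sum => x _.
  have fx1 : 0 < f x by move: (fodd x); case: (f x).
  case: (eqVneq x (z0 m)) => [->|n0]; first by rewrite (negbTE z01) /=; lia.
  have z10 : (z1 m == z0 m) = false by rewrite eq_sym (negbTE z01).
  case: (eqVneq x (z1 m)) => [->|n1]; first by rewrite /=; lia.
  by rewrite /=; lia.
rewrite !big_split /= sum1_card card_ord !sum_eq1 !big1_eq fsum in lb.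
have Lb : m.+2 = 2 * k \/ L <= (2 * (if m.+2 == 2 * k + 1 then k else (k + 1) %/ 2)).+1.
  case: (eqVneq m.+2 (2 * k)) => [|ne]; [by left | right].
  set p := (if m.+2 == 2 * k + 1 then k else (k + 1) %/ 2).
  have Hn : (m.+2 = 2 * k + 1 /\ p = k) \/
            (m.+2 = 2 * k + 2 /\ (k = 2 * p \/ k + 1 = 2 * p)).
    rewrite /p; case: eqP => E; [left | right]; lia.
  have := short (cyc m k p) (cyc_odd k0 Hn).
  by rewrite /cyc size_mkseq.
have : m.+2 - 2 * k = 0 \/ m.+2 - 2 * k = 1 \/ m.+2 - 2 * k = 2 by lia.
case=> [E|[E|E]]; rewrite E in lb; case: Lb => Lb; try lia.
all: move: Lb; case: eqP => Hq Lb; clear -E lb Lb Hq; lia.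
Qed.
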